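(* Let $K$ be a closed convex cone in a finite-dimensional real Euclidean space $\mathbb{E}$. If $K$ is facially dual complete, then for every face $F$ of $K$ with $F\neq K$ and every $x\in F$, \[ \mathcal{T}(x;K)\cap \operatorname{span} F = \mathcal{T}(x;F). \] That is, every facially dual complete closed convex cone is tangentially exposed.
   Context: $\mathbb{E}$ is identified with its dual via the inner product. For a closed convex set $C$ and $x\in C$, the tangent cone is $\mathcal{T}(x;C)=\operatorname{cl}\{d\in\mathbb{E}: x+\epsilon d\in C \text{ for some } \epsilon>0\}$. A face of a closed convex set $C$ is a closed convex subset $F\subseteq C$ such that whenever $x\in F$, $y,z\in C$ and $x$ lies in the open segment $(y,z)$, then $y,z\in F$. For a closed convex cone $K$, $K^*=\{s:\langle s,x\rangle\ge 0\ \forall x\in K\}$, and for $F\subseteq \mathbb{E}$, $F^\perp=\{s:\langle s,x\rangle=0\ \forall x\in F\}$. $K$ is facially dual complete (FDC, ''nice'') if $K^*+F^\perp$ is closed for every nonempty face $F\neq K$ of $K$. A closed convex cone $K$ is tangentially exposed if $\mathcal{T}(x;K)\cap\operatorname{span}F=\mathcal{T}(x;F)$ for every face $F\neq K$ of $K$ and every $x\in F$. *)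

(* Defs.v *)
(* E = R^n, vectors are functions Fin.t n -> R, standard inner product. *)
From Stdlib Require Import Reals.
From Stdlib Require Fin.
Open Scope R_scope.

Definition vec (n : nat) : Type := Fin.t n -> R.

Fixpoint sumFin (n : nat) : (Fin.t n -> R) -> R :=
  match n return (Fin.t n -> R) -> R with
  | O => fun _ => 0
  | S m => fun f => f Fin.F1 + sumFin m (fun i => f (Fin.FS i))
  end.

Definition vzero {n} : vec n := fun _ => 0.
Definition vadd {n} (x y : vec n) : vec n := fun i => x i + y i.
Definition vscal {n} (t : R) (x : vec n) : vec n := fun i => t * x i.
Definition vsub {n} (x y : vec n) : vec n := fun i => x i - y i.

Definition dot {n} (x y : vec n) : R := sumFin n (fun i => x i * y i).

Definition cl {n} (A : vec n -> Prop) : vec n -> Prop :=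
  fun x => forall eps, 0 < eps -> exists y, A y /\ dot (vsub x y) (vsub x y) < eps.

Definition is_closed {n} (A : vec n -> Prop) : Prop := forall x, cl A x -> A x.

Definition is_convex {n} (A : vec n -> Prop) : Prop :=
  forall x y t, A x -> A y -> 0 <= t <= 1 ->
    A (vadd (vscal (1 - t) x) (vscal t y)).

Definition is_cone {n} (K : vec n -> Prop) : Prop :=
  K vzero /\ forall x t, K x -> 0 <= t -> K (vscal t x).

Definition set_eq {n} (A B : vec n -> Prop) : Prop := forall x, A x <-> B x.

Definition subset {n} (A B : vec n -> Prop) : Prop := forall x, A x -> B x.

Definition in_open_seg {n} (x y z : vec n) : Prop :=
  exists t, 0 < t < 1 /\ x = vadd (vscal (1 - t) y) (vscal t z).

Definition is_face {n} (F C : vec n -> Prop) : Prop :=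
  is_closed F /\ is_convex F /\ subset F C /\
  forall x y z, F x -> C y -> C z -> in_open_seg x y z -> F y /\ F z.

Definition tangent_cone {n} (x : vec n) (C : vec n -> Prop) : vec n -> Prop :=
  cl (fun d => exists eps, 0 < eps /\ C (vadd x (vscal eps d))).

Inductive in_span {n} (F : vec n -> Prop) : vec n -> Prop :=
  | span_zero : in_span F vzero
  | span_mem : forall x, F x -> in_span F x
  | span_add : forall x y, in_span F x -> in_span F y -> in_span F (vadd x y)
  | span_scal : forall t x, in_span F x -> in_span F (vscal t x).

Definition dual_cone {n} (K : vec n -> Prop) : vec n -> Prop :=
  fun s => forall x, K x -> 0 <= dot s x.

Definition perp {n} (F : vec n -> Prop) : vec n -> Prop :=
  fun s => forall x, F x -> dot s x = 0.

Definition set_sum {n} (A B : vec n -> Prop) : vec n -> Prop :=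
  fun v => exists a b, A a /\ B b /\ v = vadd a b.

Definition FDC {n} (K : vec n -> Prop) : Prop :=
  forall F, is_face F K -> (exists x, F x) -> ~ set_eq F K ->
    is_closed (set_sum (dual_cone K) (perp F)).

Definition tangentially_exposed {n} (K : vec n -> Prop) : Prop :=
  forall F, is_face F K -> ~ set_eq F K -> forall x, F x ->
    set_eq (fun d => tangent_cone x K d /\ in_span F d) (tangent_cone x F).

(* Main.v *)
Require Import Defs.
From Stdlib Require Import Reals Lra Lia Psatz Classical ClassicalEpsilon FunctionalExtensionality.
From Stdlib Require Fin.
Open Scope R_scope.

Lemma sumFin_ext n (f g : Fin.t n -> R) : (forall i, f i = g i) -> sumFin n f = sumFin n g.
Proof. induction n; simpl; intros H; [reflexivity|]. rewrite H, (IHn (fun i => f (Fin.FS i)) (fun i => g (Fin.FS i))); auto. Qed.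

Lemma sumFin_add n (f g : Fin.t n -> R) : sumFin n (fun i => f i + g i) = sumFin n f + sumFin n g.
Proof. induction n; simpl; [lra|]. rewrite (IHn (fun i => f (Fin.FS i)) (fun i => g (Fin.FS i))). lra. Qed.

Lemma sumFin_scal n c (f : Fin.t n -> R) : sumFin n (fun i => c * f i) = c * sumFin n f.
Proof. induction n; simpl; [lra|]. rewrite (IHn (fun i => f (Fin.FS i))). lra. Qed.

Lemma sumFin_nonneg n (f : Fin.t n -> R) : (forall i, 0 <= f i) -> 0 <= sumFin n f.
Proof. induction n; simpl; intros H; [lra|]. specialize (IHn (fun i => f (Fin.FS i))). simpl in IHn. assert (0 <= sumFin n (fun i => f (Fin.FS i))) by (apply IHn; auto). specialize (H Fin.F1). lra. Qed.

Lemma sumFin_ge n (i : Fin.t n) (f : Fin.t n -> R) : (forall j, 0 <= f j) -> f i <= sumFin n f.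
Proof. induction i as [n|n i IH]; intros H; simpl.
 - assert (0 <= sumFin n (fun j => f (Fin.FS j))) by (apply sumFin_nonneg; auto). lra.
 - specialize (IH (fun j => f (Fin.FS j))). simpl in IH. assert (f (Fin.FS i) <= sumFin n (fun j => f (Fin.FS j))) by (apply IH; auto). specialize (H Fin.F1). lra. Qed.

Lemma sumFin_zero_inv n (f : Fin.t n -> R) : (forall i, 0 <= f i) -> sumFin n f = 0 -> forall i, f i = 0.
Proof. intros H H0 i. pose proof (sumFin_ge n i f H). pose proof (H i). lra. Qed.

Lemma sumFin_cv n (f : nat -> Fin.t n -> R) (g : Fin.t n -> R) :
  (forall i, Un_cv (fun k => f k i) (g i)) -> Un_cv (fun k => sumFin n (f k)) (sumFin n g).
Proof. induction n; simpl; intros H.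
 - intros e He. exists 0%nat. intros. unfold R_dist. rewrite Rminus_diag, Rabs_R0. lra.
 - apply CV_plus; [apply H|]. apply (IHn (fun k i => f k (Fin.FS i)) (fun i => g (Fin.FS i))). intros; apply H. Qed.

Lemma dot_comm n (a b : vec n) : dot a b = dot b a.
Proof. unfold dot. apply sumFin_ext. intros; ring. Qed.
Lemma dot_add_l n (a b c : vec n) : dot (vadd a b) c = dot a c + dot b c.
Proof. unfold dot, vadd. rewrite <- sumFin_add. apply sumFin_ext. intros; ring. Qed.
Lemma dot_add_r n (a b c : vec n) : dot c (vadd a b) = dot c a + dot c b.
Proof. unfold dot, vadd. rewrite <- sumFin_add. apply sumFin_ext. intros; ring. Qed.
Lemma dot_sub_l n (a b c : vec n) : dot (vsub a b) c = dot a c - dot b c.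
Proof. replace (dot a c - dot b c) with (dot a c + (-1) * dot b c) by ring. unfold dot, vsub. rewrite <- (sumFin_scal n (-1)), <- sumFin_add. apply sumFin_ext. intros; ring. Qed.
Lemma dot_sub_r n (a b c : vec n) : dot c (vsub a b) = dot c a - dot c b.
Proof. replace (dot c a - dot c b) with (dot c a + (-1) * dot c b) by ring. unfold dot, vsub. rewrite <- (sumFin_scal n (-1)), <- sumFin_add. apply sumFin_ext. intros; ring. Qed.
Lemma dot_scal_l n t (a c : vec n) : dot (vscal t a) c = t * dot a c.
Proof. unfold dot, vscal. rewrite <- sumFin_scal. apply sumFin_ext. intros; ring. Qed.
Lemma dot_scal_r n t (a c : vec n) : dot c (vscal t a) = t * dot c a.
Proof. unfold dot, vscal. rewrite <- sumFin_scal. apply sumFin_ext. intros; ring. Qed.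
Lemma dot_zero_l n (a : vec n) : dot vzero a = 0.
Proof. unfold dot, vzero. transitivity (0 * sumFin n a); [rewrite <- sumFin_scal; apply sumFin_ext; intros; ring | ring]. Qed.
Lemma dot_zero_r n (a : vec n) : dot a vzero = 0.
Proof. rewrite dot_comm. apply dot_zero_l. Qed.
Lemma dot_nonneg n (a : vec n) : 0 <= dot a a.
Proof. apply sumFin_nonneg. intros; nra. Qed.
Lemma coord_le n (a : vec n) i : (a i)^2 <= dot a a.
Proof. pose proof (sumFin_ge n i (fun j => a j * a j)) as H. unfold dot. simpl in H.
  assert (a i * a i <= sumFin n (fun j => a j * a j)) by (apply H; intros; nra). nra. Qed.
Lemma dot_self_zero n (a : vec n) : dot a a = 0 -> a = vzero.
Proof. intros H. apply functional_extensionality. intros i. pose proof (coord_le n a i). pose proof (dot_nonneg n a). unfold vzero. nra. Qed.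

Ltac dsimp := repeat progress rewrite ?dot_add_l, ?dot_add_r, ?dot_sub_l, ?dot_sub_r, ?dot_scal_l, ?dot_scal_r, ?dot_zero_l, ?dot_zero_r.
Ltac dsimpH H := repeat progress rewrite ?dot_add_l, ?dot_add_r, ?dot_sub_l, ?dot_sub_r, ?dot_scal_l, ?dot_scal_r, ?dot_zero_l, ?dot_zero_r in H.

Lemma cauchy_schwarz n (a b : vec n) : (dot a b)^2 <= dot a a * dot b b.
Proof.
  destruct (Req_dec (dot b b) 0) as [Hb|Hb].
  - apply dot_self_zero in Hb. subst. rewrite !dot_zero_r. pose proof (dot_nonneg n a). nra.
  - pose proof (dot_nonneg n (vsub a (vscal (dot a b / dot b b) b))) as H.
    rewrite ?dot_sub_l, ?dot_sub_r, ?dot_scal_l, ?dot_scal_r in H.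
    rewrite (dot_comm n b a) in H. pose proof (dot_nonneg n b).
    assert (0 < dot b b) by lra. set (t := dot a b / dot b b) in H.
    assert (Ht : dot a b = t * dot b b) by (unfold t; field; lra).
    rewrite Ht. rewrite Ht in H. nra.
Qed.

Ltac vext := apply functional_extensionality; intro; unfold vadd, vscal, vsub, vzero.

Lemma vsub_self n (x : vec n) : vsub x x = vzero.
Proof. vext. ring. Qed.

Lemma cl_incl n (A : vec n -> Prop) x : A x -> cl A x.
Proof. intros H e He. exists x. split; auto. rewrite vsub_self, dot_zero_l. lra. Qed.

Lemma cl_mono n (A B : vec n -> Prop) x : subset A B -> cl A x -> cl B x.
Proof. intros S H e He. destruct (H e He) as [y [Hy Hd]]. exists y. auto. Qed.

Lemma par_ineq n (u v : vec n) : dot (vadd u v) (vadd u v) <= 2 * dot u u + 2 * dot v v.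
Proof. pose proof (dot_nonneg n (vsub u v)). dsimp. dsimpH H. rewrite (dot_comm n v u) in *. lra. Qed.

Lemma cl_closed n (A : vec n -> Prop) : is_closed (cl A).
Proof. intros z Hz e He. destruct (Hz (e/4)) as [y [Hy H1]]; [lra|].
  destruct (Hy (e/4)) as [y' [Hy' H2]]; [lra|]. exists y'. split; auto.
  replace (vsub z y') with (vadd (vsub z y) (vsub y y')) by (vext; ring).
  pose proof (par_ineq n (vsub z y) (vsub y y')). lra. Qed.

Lemma halfspace n (A : vec n -> Prop) k : (forall a, A a -> 0 <= dot k a) -> forall z, cl A z -> 0 <= dot k z.
Proof. intros H z Hz. destruct (Rle_or_lt 0 (dot k z)) as [|Hlt]; auto. exfalso.
  set (d := - dot k z). pose proof (dot_nonneg n k).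
  destruct (Hz (d*d/(dot k k + 1))) as [y [Hy Hd]].
  { unfold d. apply Rdiv_lt_0_compat; nra. }
  pose proof (H y Hy) as Hky. pose proof (cauchy_schwarz n k (vsub z y)) as CS. rewrite dot_sub_r in CS.
  assert (dot k z - dot k y <= - d) by (unfold d; lra).
  assert (d * d <= (dot k z - dot k y)^2) by (unfold d in *; nra).
  assert (dot k k * dot (vsub z y) (vsub z y) < d*d).
  { apply Rmult_lt_compat_r with (r := dot k k + 1) in Hd; [|lra].
    unfold Rdiv in Hd. rewrite Rmult_assoc, Rinv_l in Hd by lra. pose proof (dot_nonneg n (vsub z y)). nra. }
  lra. Qed.

Lemma cl_convex n (A : vec n -> Prop) : is_convex A -> is_convex (cl A).
Proof. intros C x y t Hx Hy Ht e He. destruct Ht as [Ht0 Ht1].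
  destruct (Hx (e/4)) as [x' [Hx' H1]]; [lra|]. destruct (Hy (e/4)) as [y' [Hy' H2]]; [lra|].
  exists (vadd (vscal (1 - t) x') (vscal t y')). split; [apply C; auto; lra|].
  replace (vsub (vadd (vscal (1 - t) x) (vscal t y)) (vadd (vscal (1 - t) x') (vscal t y')))
    with (vadd (vscal (1-t) (vsub x x')) (vscal t (vsub y y'))) by (vext; ring).
  pose proof (par_ineq n (vscal (1-t) (vsub x x')) (vscal t (vsub y y'))).
  rewrite !dot_scal_l, !dot_scal_r in H.
  pose proof (dot_nonneg n (vsub x x')). pose proof (dot_nonneg n (vsub y y')).
  assert ((1-t)*((1-t)*dot (vsub x x') (vsub x x')) <= dot (vsub x x') (vsub x x')).
  { rewrite <- Rmult_assoc. pattern (dot (vsub x x') (vsub x x')) at 2; rewrite <- Rmult_1_l.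
    apply Rmult_le_compat_r; [auto|nra]. }
  assert (t*(t*dot (vsub y y') (vsub y y')) <= dot (vsub y y') (vsub y y')).
  { rewrite <- Rmult_assoc. pattern (dot (vsub y y') (vsub y y')) at 2; rewrite <- Rmult_1_l.
    apply Rmult_le_compat_r; [auto|nra]. }
  lra. Qed.

Lemma cl_cone n (A : vec n -> Prop) : is_cone A -> is_cone (cl A).
Proof. intros [H0 Hs]. split; [apply cl_incl; auto|]. intros x t Hx Ht e He.
  destruct (Hx (e/(t*t+1))) as [x' [Hx' H1]]; [apply Rdiv_lt_0_compat; nra|].
  exists (vscal t x'). split; auto.
  replace (vsub (vscal t x) (vscal t x')) with (vscal t (vsub x x')) by (vext; ring).
  rewrite dot_scal_l, dot_scal_r. pose proof (dot_nonneg n (vsub x x')).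
  apply Rmult_lt_compat_r with (r := t*t + 1) in H1; [|nra].
  unfold Rdiv in H1. rewrite Rmult_assoc, Rinv_l in H1 by nra. nra. Qed.

Lemma CV_cst (c : R) : Un_cv (fun _ => c) c.
Proof. intros e He. exists 0%nat. intros. unfold R_dist. rewrite Rminus_diag, Rabs_R0. lra. Qed.

Lemma archN e : 0 < e -> exists N, forall k, (N <= k)%nat -> / (INR k + 1) < e.
Proof. intros He. destruct (archimed_cor1 e He) as [N [HN HN0]]. exists N. intros k Hk.
  apply le_INR in Hk. apply lt_INR in HN0. simpl in HN0.
  apply Rle_lt_trans with (/ INR N); auto. apply Rinv_le_contravar; lra. Qed.

Lemma inv_pos k : 0 < / (INR k + 1).
Proof. apply Rinv_0_lt_compat. pose proof (pos_INR k). lra. Qed.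

Definition cone_set {n} (C : vec n -> Prop) := is_closed C /\ is_convex C /\ is_cone C.

Lemma nearest n (C : vec n -> Prop) z : is_closed C -> is_convex C -> C vzero ->
  exists p, C p /\ forall c, C c -> dot (vsub z p) (vsub z p) <= dot (vsub z c) (vsub z c).
Proof.
  intros Hcl Hcv H0.
  set (E := fun r => exists c, C c /\ r = - dot (vsub z c) (vsub z c)).
  assert (HB : bound E). { exists 0. intros r [c [_ ->]]. pose proof (dot_nonneg n (vsub z c)). lra. }
  assert (HE : exists r, E r). { exists (- dot (vsub z vzero) (vsub z vzero)). exists vzero. auto. }
  destruct (completeness E HB HE) as [M [HM1 HM2]].
  set (m := - M).
  assert (Hlow : forall c, C c -> m <= dot (vsub z c) (vsub z c)).
  { intros c Hc. assert (E (- dot (vsub z c) (vsub z c))) by (exists c; auto). apply HM1 in H. unfold m. lra. }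
  assert (Happ : forall e, 0 < e -> exists c, C c /\ dot (vsub z c) (vsub z c) < m + e).
  { intros e He. apply NNPP. intros Hn. assert (M <= M - e); [|lra].
    apply HM2. intros r [c [Hc ->]]. destruct (Rle_or_lt (m + e) (dot (vsub z c) (vsub z c))) as [Hle|Hlt].
    - unfold m in Hle. lra.
    - exfalso. apply Hn. exists c. auto. }
  assert (Hseq : exists c : nat -> vec n, forall k, C (c k) /\ dot (vsub z (c k)) (vsub z (c k)) < m + / (INR k + 1)).
  { exists (fun k => proj1_sig (constructive_indefinite_description _ (Happ _ (inv_pos k)))).
    intros k. destruct (constructive_indefinite_description _ (Happ _ (inv_pos k))) as [c Hc]. exact Hc. }
  destruct Hseq as [c Hc].
  assert (Hcau : forall k l, dot (vsub (c k) (c l)) (vsub (c k) (c l)) <= 2 * / (INR k + 1) + 2 * / (INR l + 1)).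
  { intros k l. destruct (Hc k) as [Ck Dk]. destruct (Hc l) as [Cl Dl].
    set (mid := vadd (vscal (1 - /2) (c k)) (vscal (/2) (c l))).
    assert (Cm : C mid) by (apply Hcv; auto; lra). apply Hlow in Cm.
    replace (vsub z mid) with (vscal (/2) (vadd (vsub z (c k)) (vsub z (c l)))) in Cm by (unfold mid; vext; field).
    replace (vsub (c k) (c l)) with (vsub (vsub z (c l)) (vsub z (c k))) by (vext; ring).
    set (u := vsub z (c k)) in *. set (v := vsub z (c l)) in *.
    dsimp. dsimpH Cm. rewrite (dot_comm n u v) in *. lra. }
  assert (Hcc : forall i, Cauchy_crit (fun k => c k i)).
  { intros i e He. destruct (archN (e*e/4)) as [N HN]. { nra. }
    exists N. intros k l Hk Hl. unfold R_dist.
    pose proof (coord_le n (vsub (c k) (c l)) i) as Hco. unfold vsub in Hco at 1.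
    pose proof (Hcau k l). pose proof (HN k Hk). pose proof (HN l Hl).
    assert ((c k i - c l i)^2 < e * e) by lra.
    apply Rabs_def1; nra. }
  set (p := fun i => proj1_sig (R_complete _ (Hcc i))).
  assert (Hp : forall i, Un_cv (fun k => c k i) (p i)).
  { intros i. unfold p. destruct (R_complete _ (Hcc i)) as [l Hl]. exact Hl. }
  assert (Hm : Un_cv (fun k => dot (vsub z (c k)) (vsub z (c k))) m).
  { intros e He. destruct (archN e He) as [N HN]. exists N. intros k Hk. unfold R_dist.
    destruct (Hc k) as [Ck Dk]. pose proof (Hlow _ Ck). pose proof (HN k Hk). apply Rabs_def1; lra. }
  assert (Hzp : Un_cv (fun k => dot (vsub z (c k)) (vsub z (c k))) (dot (vsub z p) (vsub z p))).
  { unfold dot, vsub. apply (sumFin_cv n (fun k i => (z i - c k i) * (z i - c k i))).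
    intros i. apply CV_mult; apply CV_minus; auto using CV_cst. }
  assert (Heq : dot (vsub z p) (vsub z p) = m) by (eapply UL_sequence; eauto).
  assert (Cp : C p).
  { apply Hcl. intros e He.
    assert (Hpc : Un_cv (fun k => dot (vsub p (c k)) (vsub p (c k))) (dot (vsub p p) (vsub p p))).
    { unfold dot, vsub. apply (sumFin_cv n (fun k i => (p i - c k i) * (p i - c k i))).
      intros i. apply CV_mult; apply CV_minus; auto using CV_cst. }
    rewrite vsub_self, dot_zero_l in Hpc. destruct (Hpc e He) as [N HN].
    exists (c N). split; [apply Hc|]. specialize (HN N (le_n N)). unfold R_dist in HN.
    rewrite Rminus_0_r in HN. pose proof (dot_nonneg n (vsub p (c N))). rewrite Rabs_right in HN; lra. }
  exists p. split; auto. intros c0 Hc0. rewrite Heq. auto.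
Qed.

Lemma proj_cone n (C : vec n -> Prop) z : is_closed C -> is_convex C -> is_cone C ->
  exists p, C p /\ (forall c, C c -> dot (vsub z p) c <= 0) /\ dot (vsub z p) p = 0.
Proof.
  intros Hcl Hcv [H0 Hsc]. destruct (nearest n C z Hcl Hcv H0) as [p [Cp Hp]].
  assert (Hvar : forall c, C c -> dot (vsub z p) (vsub c p) <= 0).
  { intros c Hc. set (a := dot (vsub z p) (vsub c p)). set (b := dot (vsub c p) (vsub c p)).
    pose proof (dot_nonneg n (vsub c p)) as Hb. fold b in Hb.
    destruct (Rle_or_lt a 0) as [|Ha]; auto. exfalso.
    set (t := a / (a + b)).
    assert (Ht0 : 0 < t) by (unfold t; apply Rdiv_lt_0_compat; lra).
    assert (Ht1 : t <= 1) by (unfold t; apply Rmult_le_reg_r with (a+b); [lra|]; unfold Rdiv; rewrite Rmult_assoc, Rinv_l; lra).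
    assert (Cw : C (vadd (vscal (1 - t) p) (vscal t c))) by (apply Hcv; auto; lra).
    apply Hp in Cw.
    replace (vsub z (vadd (vscal (1 - t) p) (vscal t c))) with (vsub (vsub z p) (vscal t (vsub c p))) in Cw by (vext; ring).
    set (u := vsub z p) in *. set (w := vsub c p) in *. dsimpH Cw. rewrite (dot_comm n w u) in Cw. fold a b in Cw.
    assert (t * b >= 2 * a) by nra.
    assert (t * (a + b) = a) by (unfold t; field; lra). nra. }
  exists p. split; auto.
  assert (A1 := Hvar vzero H0). assert (A2 := Hvar (vscal 2 p) (Hsc p 2 Cp ltac:(lra))).
  replace (vsub vzero p) with (vscal (-1) p) in A1 by (vext; ring).
  replace (vsub (vscal 2 p) p) with p in A2 by (vext; ring).
  rewrite dot_scal_r in A1.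
  split; [|lra]. intros c Hc. pose proof (Hvar c Hc). set (u := vsub z p) in *. rewrite dot_sub_r in H. lra.
Qed.

Lemma separate n (C : vec n -> Prop) z : is_closed C -> is_convex C -> is_cone C -> ~ C z ->
  exists y, (forall c, C c -> 0 <= dot y c) /\ dot y z < 0.
Proof.
  intros H1 H2 H3 Hz. destruct (proj_cone n C z H1 H2 H3) as [p [Cp [Hc Hp]]].
  exists (vsub p z). split.
  - intros c Cc. specialize (Hc c Cc). replace (vsub p z) with (vscal (-1) (vsub z p)) by (vext; ring).
    rewrite dot_scal_l. lra.
  - assert (p <> z) by (intro; subst; auto).
    assert (dot (vsub z p) (vsub z p) <> 0) by (intro E; apply dot_self_zero in E; apply H;
       apply functional_extensionality; intro i; assert (vsub z p i = vzero i) by (rewrite E; auto); unfold vsub, vzero in *; lra).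
    pose proof (dot_nonneg n (vsub z p)).
    replace (vsub p z) with (vscal (-1) (vsub z p)) by (vext; ring). rewrite dot_scal_l.
    replace z with (vadd (vsub z p) p) at 2 by (vext; ring). rewrite dot_add_r. lra.
Qed.

Definition is_subspace {n} (V : vec n -> Prop) : Prop :=
  V vzero /\ (forall a b, V a -> V b -> V (vadd a b)) /\ (forall t a, V a -> V (vscal t a)).

Definition vcons {m} (a : R) (u : vec m) : vec (S m) := fun i => Fin.caseS' i (fun _ => R) a u.
Definition vtl {m} (v : vec (S m)) : vec m := fun i => v (Fin.FS i).

Lemma vcons_eta m (v : vec (S m)) : v = vcons (v Fin.F1) (vtl v).
Proof. apply functional_extensionality. intro i. pattern i. apply Fin.caseS'; reflexivity. Qed.

Lemma vcons_F1 m a (u : vec m) : vcons a u Fin.F1 = a.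
Proof. reflexivity. Qed.
Lemma vtl_vcons m a (u : vec m) : vtl (vcons a u) = u.
Proof. reflexivity. Qed.

Lemma dot_S m (x y : vec (S m)) : dot x y = x Fin.F1 * y Fin.F1 + dot (vtl x) (vtl y).
Proof. reflexivity. Qed.

Lemma vcons_add m a b (u w : vec m) : vadd (vcons a u) (vcons b w) = vcons (a + b) (vadd u w).
Proof. apply functional_extensionality. intro i. pattern i. apply Fin.caseS'; reflexivity. Qed.
Lemma vcons_scal m t a (u : vec m) : vscal t (vcons a u) = vcons (t * a) (vscal t u).
Proof. apply functional_extensionality. intro i. pattern i. apply Fin.caseS'; reflexivity. Qed.
Lemma vcons_zero m : (vzero : vec (S m)) = vcons 0 vzero.
Proof. apply functional_extensionality. intro i. pattern i. apply Fin.caseS'; reflexivity. Qed.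

Lemma subspace_closed n (V : vec n -> Prop) : is_subspace V -> is_closed V.
Proof.
  revert V. induction n as [|m IH]; intros V HV.
  - destruct HV as [H0 _]. intros z _. replace z with (@vzero 0); auto.
    apply functional_extensionality. intro i. exact (Fin.case0 (fun i => vzero i = z i) i).
  - destruct HV as [H0 [Hadd Hsc]].
    set (W := fun u : vec m => V (vcons 0 u)).
    assert (HW : is_subspace W).
    { unfold W. split; [|split].
      - rewrite <- vcons_zero. auto.
      - intros a b Ha Hb. replace 0 with (0 + 0) by ring. rewrite <- vcons_add. auto.
      - intros t a Ha. replace 0 with (t * 0) by ring. rewrite <- vcons_scal. auto. }
    specialize (IH W HW).
    assert (Hsub : forall a b, V a -> V b -> V (vsub a b)).
    { intros a b Ha Hb. replace (vsub a b) with (vadd a (vscal (-1) b)) by (vext; ring). auto. }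
    assert (HtoW : forall w, V w -> w Fin.F1 = 0 -> W (vtl w)).
    { intros w Hw H1. unfold W. rewrite <- H1, <- vcons_eta. auto. }
    intros z Hz.
    destruct (classic (exists v0, V v0 /\ v0 Fin.F1 <> 0)) as [[v0 [Hv0 Hn0]]|Hnone].
    + set (v1 := vscal (/ v0 Fin.F1) v0).
      assert (Hv1 : V v1) by (unfold v1; auto).
      assert (Hv11 : v1 Fin.F1 = 1) by (unfold v1, vscal; field; auto).
      set (a := z Fin.F1). set (r := vsub z (vscal a v1)).
      assert (Hr1 : r Fin.F1 = 0) by (unfold r, vsub, vscal; rewrite Hv11; unfold a; ring).
      assert (Wr : W (vtl r)).
      { apply IH. intros e He. set (K1 := dot v1 v1). pose proof (dot_nonneg _ v1) as HK1. fold K1 in HK1.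
        destruct (Hz (e / (2 * (1 + K1)))) as [y [Hy Hd]]. { apply Rdiv_lt_0_compat; lra. }
        set (w := vsub y (vscal (y Fin.F1) v1)).
        assert (Hw : V w) by (unfold w; auto).
        assert (Hw1 : w Fin.F1 = 0) by (unfold w, vsub, vscal; rewrite Hv11; ring).
        exists (vtl w). split; [apply HtoW; auto|].
        change (vsub (vtl r) (vtl w)) with (vtl (vsub r w)).
        assert (E1 : dot (vtl (vsub r w)) (vtl (vsub r w)) <= dot (vsub r w) (vsub r w)).
        { rewrite (dot_S m (vsub r w)). pose proof (Rle_0_sqr (vsub r w Fin.F1)). unfold Rsqr in *. lra. }
        replace (vsub r w) with (vadd (vsub z y) (vscal (-(z Fin.F1 - y Fin.F1)) v1)) in E1 |- *
          by (unfold r, w, a; vext; ring).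
        pose proof (par_ineq _ (vsub z y) (vscal (-(z Fin.F1 - y Fin.F1)) v1)) as P.
        rewrite dot_scal_l, dot_scal_r in P. fold K1 in P.
        pose proof (coord_le _ (vsub z y) Fin.F1) as Cz. unfold vsub in Cz at 1.
        assert (Hd' : dot (vsub z y) (vsub z y) * (2 * (1 + K1)) < e).
        { apply Rmult_lt_compat_r with (r := 2 * (1 + K1)) in Hd; [|lra].
          unfold Rdiv in Hd. rewrite Rmult_assoc, Rinv_l in Hd by lra. lra. }
        assert (- (z Fin.F1 - y Fin.F1) * (- (z Fin.F1 - y Fin.F1) * K1) <= dot (vsub z y) (vsub z y) * K1).
        { replace (- (z Fin.F1 - y Fin.F1) * (- (z Fin.F1 - y Fin.F1) * K1)) with ((z Fin.F1 - y Fin.F1)^2 * K1) by ring.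
          apply Rmult_le_compat_r; auto. }
        lra. }
      unfold W in Wr. rewrite <- Hr1, <- vcons_eta in Wr.
      replace z with (vadd r (vscal a v1)) by (unfold r; vext; ring). auto.
    + assert (Hall : forall v, V v -> v Fin.F1 = 0).
      { intros v Hv. apply NNPP. intro Hn. apply Hnone. exists v; auto. }
      assert (Hz1 : z Fin.F1 = 0).
      { apply NNPP. intro Hn. destruct (Hz ((z Fin.F1)^2)) as [y [Hy Hd]]. { simpl; rewrite Rmult_1_r; apply Rsqr_pos_lt; auto. }
        pose proof (coord_le _ (vsub z y) Fin.F1) as Cz. unfold vsub in Cz at 1. rewrite (Hall y Hy) in Cz. lra. }
      assert (Wz : W (vtl z)).
      { apply IH. intros e He. destruct (Hz e He) as [y [Hy Hd]]. exists (vtl y). split; [apply HtoW; auto|].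
        change (vsub (vtl z) (vtl y)) with (vtl (vsub z y)).
        rewrite (dot_S m (vsub z y)) in Hd. pose proof (Rle_0_sqr (vsub z y Fin.F1)). unfold Rsqr in *. lra. }
      unfold W in Wz. rewrite <- Hz1, <- vcons_eta in Wz. auto.
Qed.

Lemma span_subspace n (F : vec n -> Prop) : is_subspace (in_span F).
Proof. split; [constructor|split]; intros; [apply span_add|apply span_scal]; auto. Qed.

Lemma span_closed n (F : vec n -> Prop) : is_closed (in_span F).
Proof. apply subspace_closed, span_subspace. Qed.

Lemma perp_span n (F : vec n -> Prop) g d : perp F g -> in_span F d -> dot g d = 0.
Proof. intros Hg Hd. induction Hd as [| x Hx | x y _ IH1 _ IH2 | t x _ IH].
  - apply dot_zero_r.
  - apply Hg; auto.
  - rewrite dot_add_r, IH1, IH2; ring.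
  - rewrite dot_scal_r, IH; ring. Qed.

Section Faces.
Variable n : nat.
Variables K F : vec n -> Prop.
Hypothesis HK : is_cone K.
Hypothesis HF : is_face F K.

Lemma face_zero x : F x -> F vzero.
Proof. intros Hx. destruct HF as [_ [_ [Hsub Hext]]]. destruct HK as [K0 Ks].
  assert (K (vscal 2 x)) by (apply Ks; auto; lra).
  refine (proj1 (Hext x vzero (vscal 2 x) Hx K0 H _)).
  exists (/2). split; [lra|]. vext. field. Qed.

Lemma face_scal x f t : F x -> F f -> 0 <= t -> F (vscal t f).
Proof. intros Hx Hf Ht. pose proof (face_zero x Hx) as F0.
  destruct HF as [_ [Hcv [Hsub Hext]]]. destruct HK as [K0 Ks].
  destruct (Rle_or_lt t 1).
  - replace (vscal t f) with (vadd (vscal (1 - t) vzero) (vscal t f)) by (vext; ring). apply Hcv; auto.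
  - assert (K (vscal t f)) by (apply Ks; auto; lra).
    refine (proj2 (Hext f vzero (vscal t f) Hf K0 H0 _)).
    exists (/t). split. split; [apply Rinv_0_lt_compat; lra|]. rewrite <- Rinv_1. apply Rinv_lt_contravar; lra.
    vext. field. lra. Qed.

Lemma face_add x a b : F x -> F a -> F b -> F (vadd a b).
Proof. intros Hx Ha Hb. destruct HF as [_ [Hcv _]].
  replace (vadd a b) with (vscal 2 (vadd (vscal (1 - /2) a) (vscal (/2) b))) by (vext; field).
  apply face_scal with x; auto; try lra. apply Hcv; auto; lra. Qed.

Lemma span_diff x y : F x -> in_span F y -> exists a b, F a /\ F b /\ y = vsub a b.
Proof. intros Hx Hy. pose proof (face_zero x Hx) as F0. induction Hy.
  - exists vzero, vzero. repeat split; auto. vext; ring.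
  - exists x0, vzero. repeat split; auto. vext; ring.
  - destruct IHHy1 as [a1 [b1 [H1 [H2 ->]]]]. destruct IHHy2 as [a2 [b2 [H3 [H4 ->]]]].
    exists (vadd a1 a2), (vadd b1 b2). repeat split; try (apply face_add with x; auto). vext; ring.
  - destruct IHHy as [a [b [H1 [H2 ->]]]]. destruct (Rle_or_lt 0 t).
    + exists (vscal t a), (vscal t b). repeat split; try (apply face_scal with x; auto). vext; ring.
    + exists (vscal (-t) b), (vscal (-t) a). repeat split; try (apply face_scal with x; auto; lra). vext; ring.
Qed.

Lemma face_span x y : F x -> K y -> in_span F y -> F y.
Proof. intros Hx Ky Hy. destruct (span_diff x y Hx Hy) as [a [b [Ha [Hb ->]]]].
  destruct HF as [_ [_ [Hsub Hext]]].
  assert (Fh : F (vscal (/2) a)) by (apply face_scal with x; auto; lra).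
  refine (proj1 (Hext _ (vsub a b) b Fh Ky (Hsub b Hb) _)).
  exists (/2). split; [lra|]. vext. field. Qed.

End Faces.

Lemma div_nonneg a b : 0 <= a -> 0 < b -> 0 <= a / b.
Proof. intros. unfold Rdiv. apply Rmult_le_pos; [auto|left; apply Rinv_0_lt_compat; auto]. Qed.

Theorem theorem3p1 (n : nat) (K : vec n -> Prop) :
  is_closed K -> is_convex K -> is_cone K -> FDC K -> tangentially_exposed K.
Proof.
  intros Kcl Kcv Kcone Hfdc F HF HFK x Hx d.
  pose proof HF as HF'. destruct HF' as [Fcl [Fcv [FsubK Fext]]].
  set (DF := fun d => exists eps, 0 < eps /\ F (vadd x (vscal eps d))).
  assert (DFspan : subset DF (in_span F)).
  { intros d' [e [He Hd']].
    replace d' with (vscal (/e) (vadd (vadd x (vscal e d')) (vscal (-1) x))) by (vext; field; lra).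
    apply span_scal, span_add; [apply span_mem; auto| apply span_scal, span_mem; auto]. }
  assert (DFK : subset DF (fun d => exists eps, 0 < eps /\ K (vadd x (vscal eps d)))).
  { intros d' [e [He Hd']]. exists e. auto. }
  split.
  2:{ intros Td. split.
      - unfold tangent_cone. eapply cl_mono; [exact DFK|exact Td].
      - apply span_closed. eapply cl_mono; [exact DFspan|exact Td]. }
  intros [Td Sd]. apply NNPP. intros Hnot.
  assert (DFcv : is_convex DF).
  { intros d1 d2 t [e1 [He1 H1]] [e2 [He2 H2]] [Ht0 Ht1].
    set (e := e1 * e2 / (e1 + e2)). set (al := e2 * (1 - t) / (e1 + e2)). set (be := e1 * t / (e1 + e2)).
    set (ga := (e1 * (1 - t) + e2 * t) / (e1 + e2)).
    assert (He : 0 < e) by (unfold e; apply Rdiv_lt_0_compat; nra).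
    exists e. split; auto.
    replace (vadd x (vscal e (vadd (vscal (1 - t) d1) (vscal t d2))))
      with (vadd (vscal ga x) (vadd (vscal al (vadd x (vscal e1 d1))) (vscal be (vadd x (vscal e2 d2)))))
      by (unfold e, al, be, ga; vext; field; lra).
    apply face_add with K x; auto. apply face_scal with K x; auto. unfold ga; apply div_nonneg; nra.
    apply face_add with K x; auto; apply face_scal with K x; auto.
    unfold al; apply div_nonneg; nra. unfold be; apply div_nonneg; nra. }
  assert (DFcone : is_cone DF).
  { split.
    - exists 1. split; [lra|]. replace (vadd x (vscal 1 vzero)) with x by (vext; ring). auto.
    - intros d' t [e [He Hd']] Ht. destruct (Req_dec t 0) as [->|Htn].
      + exists 1. split; [lra|]. replace (vadd x (vscal 1 (vscal 0 d'))) with x by (vext; ring). auto.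
      + exists (e / t). split; [apply Rdiv_lt_0_compat; lra|].
        replace (vadd x (vscal (e / t) (vscal t d'))) with (vadd x (vscal e d')) by (vext; field; auto). auto. }
  destruct (separate n (cl DF) d (cl_closed n DF) (cl_convex n DF DFcv) (cl_cone n DF DFcone) Hnot)
    as [s [Hs Hsd]].
  assert (HsDF : forall c, DF c -> 0 <= dot s c) by (intros; apply Hs, cl_incl; auto).
  assert (Hsx : dot s x = 0).
  { assert (A1 : DF x).
    { exists 1. split; [lra|]. replace (vadd x (vscal 1 x)) with (vscal 2 x) by (vext; ring).
      apply face_scal with K x; auto; lra. }
    assert (A2 : DF (vscal (-1) x)).
    { exists (/2). split; [lra|]. replace (vadd x (vscal (/2) (vscal (-1) x))) with (vscal (/2) x) by (vext; field).
      apply face_scal with K x; auto; lra. }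
    apply HsDF in A1. apply HsDF in A2. rewrite dot_scal_r in A2. lra. }
  assert (HsF : forall f, F f -> 0 <= dot s f).
  { intros f Hf. apply HsDF. exists 1. split; [lra|].
    replace (vadd x (vscal 1 f)) with (vadd x f) by (vext; ring). apply face_add with K x; auto. }
  set (G := set_sum (dual_cone K) (perp F)).
  assert (Gcl : is_closed G) by (apply Hfdc; auto; exists x; auto).
  assert (dual0 : dual_cone K vzero) by (intros z _; rewrite dot_zero_l; lra).
  assert (perp0 : perp F vzero) by (intros z _; apply dot_zero_l).
  assert (Gcv : is_convex G).
  { intros s1 s2 t [k1 [g1 [Hk1 [Hg1 ->]]]] [k2 [g2 [Hk2 [Hg2 ->]]]] Ht.
    exists (vadd (vscal (1-t) k1) (vscal t k2)), (vadd (vscal (1-t) g1) (vscal t g2)).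
    split; [|split].
    - intros z Kz. dsimp. specialize (Hk1 z Kz). specialize (Hk2 z Kz). nra.
    - intros z Fz. dsimp. rewrite (Hg1 z Fz), (Hg2 z Fz). ring.
    - vext; ring. }
  assert (Gcone : is_cone G).
  { split.
    - exists vzero, vzero. repeat split; auto. vext; ring.
    - intros s' t [k [g [Hk [Hg ->]]]] Ht. exists (vscal t k), (vscal t g). split; [|split].
      + intros z Kz. rewrite dot_scal_l. specialize (Hk z Kz). nra.
      + intros z Fz. rewrite dot_scal_l, (Hg z Fz). ring.
      + vext; ring. }
  assert (sG : G s).
  { apply NNPP. intros HsG. destruct (separate n G s Gcl Gcv Gcone HsG) as [y [Hy Hys]].
    assert (Ky : K y).
    { apply NNPP. intros Hny. destruct (separate n K y Kcl Kcv Kcone Hny) as [w [Hw Hwy]].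
      assert (G w) by (exists w, vzero; repeat split; auto; vext; ring).
      apply Hy in H. rewrite dot_comm in H. lra. }
    assert (Hyp : forall g, perp F g -> dot y g = 0).
    { intros g Hg. assert (G g) by (exists vzero, g; repeat split; auto; vext; ring).
      assert (Hg' : perp F (vscal (-1) g)) by (intros z Fz; rewrite dot_scal_l, (Hg z Fz); ring).
      assert (G (vscal (-1) g)) by (exists vzero, (vscal (-1) g); repeat split; auto; vext; ring).
      apply Hy in H. apply Hy in H0. rewrite dot_scal_r in H0. lra. }
    assert (Sy : in_span F y).
    { assert (Scv : is_convex (in_span F)).
      { intros a b t Ha Hb _. apply span_add; apply span_scal; auto. }
      assert (Scone : is_cone (in_span F)) by (split; [constructor|intros; apply span_scal; auto]).
      destruct (proj_cone n (in_span F) y (span_closed n F) Scv Scone) as [q [Sq [Hq1 Hq2]]].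
      assert (Hperp : perp F (vsub y q)).
      { intros f Hf. pose proof (Hq1 f (span_mem _ _ Hf)).
        pose proof (Hq1 (vscal (-1) f) (span_scal _ _ _ (span_mem _ _ Hf))). rewrite dot_scal_r in H0. lra. }
      apply Hyp in Hperp.
      assert (E : dot (vsub y q) (vsub y q) = 0).
      { rewrite dot_sub_l. rewrite Hperp. rewrite dot_comm in Hq2. lra. }
      apply dot_self_zero in E. replace y with q; auto.
      apply functional_extensionality. intro i. assert (vsub y q i = vzero i) by (rewrite E; auto).
      unfold vsub, vzero in H. lra. }
    assert (Fy : F y) by (apply face_span with K x; auto).
    apply HsF in Fy. rewrite dot_comm in Fy. lra. }
  destruct sG as [k [g [Hk [Hg ->]]]].
  rewrite dot_add_l in Hsx, Hsd. rewrite (Hg x Hx) in Hsx. rewrite (perp_span n F g d Hg Sd) in Hsd.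
  assert (0 <= dot k d).
  { apply (halfspace n (fun d => exists eps, 0 < eps /\ K (vadd x (vscal eps d))) k) with (z := d); [|exact Td].
    intros d' [e [He Kd]]. apply Hk in Kd. dsimpH Kd. nra. }
  lra.
Qed.
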